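(* Let $G$ be a finite group and let $p,q$ be distinct primes that are non-adjacent in the codegree graph $\Gamma(G)$. Then it cannot happen that $G$ has a Hall $\{p,q\}$-subgroup $H_1$ which is either a Frobenius group whose kernel is its Sylow $q$-subgroup and whose complement is its Sylow $p$-subgroup, or a 2-Frobenius group of type $(p,q,p)$, and also a Hall $\{p,q\}$-subgroup $H_2$ which is either a Frobenius group whose kernel is its Sylow $p$-subgroup and whose complement is its Sylow $q$-subgroup, or a 2-Frobenius group of type $(q,p,q)$. Consequently, orienting the edge $pq$ of $\overline{\Gamma}(G)$ as $p\to q$ when some Hall $\{p,q\}$-subgroup is of the first kind gives an orientation independent of the choice of Hall $\{p,q\}$-subgroup.
   Context: For $\chi\in{\rm Irr}(G)$, ${\rm cod}(\chi)=|G:\ker\chi|/\chi(1)$; the codegree graph $\Gamma(G)$ has vertices the prime divisors of $|G|$, with distinct $p,q$ adjacent iff $pq$ divides some ${\rm cod}(\chi)$, and $\overline{\Gamma}(G)$ is its complement. It is known that if $p,q$ are non-adjacent in $\Gamma(G)$ then $G$ has a Hall $\{p,q\}$-subgroup and each such is a Frobenius group or a 2-Frobenius group. A Frobenius group is $N\rtimes K$ with $C_N(k)=1$ for all $1\ne k\in K$ (kernel $N$, complement $K$). A group $H$ is a 2-Frobenius group of type $(p,q,r)$ if it has normal subgroups $N\le M$ such that $M$ is a Frobenius group with kernel $N$, $H/N$ is a Frobenius group with kernel $M/N$, $N$ is a $p$-group, $M/N$ is a $q$-group and $H/M$ is an $r$-group. *)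

(* Defs.v *)
From HB Require Import structures.
From mathcomp Require Import all_boot all_order all_algebra all_fingroup all_solvable all_field all_character.
Set Implicit Arguments. Unset Strict Implicit. Unset Printing Implicit Defensive.
Import Order.TTheory GRing.Theory Num.Theory.
Local Open Scope group_scope.

(* Codegree of an irreducible character: cod(chi) = |G : ker chi| / chi(1).
   Since chi(1) is a natural number dividing |G : ker chi|, we compute it in nat. *)
Definition codegree (gT : finGroupType) (G : {group gT}) (i : Iirr G) : nat :=
  (#|G : cfker ('chi[G]_i)%R| %/ Num.truncn (('chi[G]_i)%R 1%g))%N.

Definition codeg_adjacent (gT : finGroupType) (G : {group gT}) (p q : nat) : bool :=
  [exists i : Iirr G, (p * q %| codegree i)%N].

Definition codeg_vertex (gT : finGroupType) (G : {group gT}) (p : nat) : bool :=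
  p \in \pi(G).

Definition pi2 (p q : nat) : nat_pred := [pred r : nat | (r == p) || (r == q)].

Definition two_Frobenius (gT : finGroupType) (H : {group gT}) (p q r : nat) : Prop :=
  exists N M : {group gT},
    [/\ [/\ N <| H, M <| H & N \subset M],
        [Frobenius M with kernel N],
        [Frobenius (H / N) with kernel (M / N)] &
        [/\ p.-group N, q.-group (M / N) & r.-group (H / M)]].

Definition Frob_kernel_q_compl_p (gT : finGroupType) (H : {group gT}) (p q : nat) : Prop :=
  exists Q P : {group gT},
    [/\ [Frobenius H = Q ><| P], q.-Sylow(H) Q & p.-Sylow(H) P].

(* Main.v *)
Require Import Defs.
From HB Require Import structures.
From mathcomp Require Import all_boot all_order all_algebra all_fingroup all_solvable all_field all_character.
From mathcomp Require Import zify.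
Local Open Scope group_scope.

Lemma two_Frob_nat (gT : finGroupType) (H : {group gT}) p q r :
  two_Frobenius H p q r -> exists n m c,
  [/\ #|H| = (n * m * c)%N, p.-nat n, q.-nat m, r.-nat c &
      [/\ (1 < n)%N, (1 < c)%N, (0 < m)%N, (m %| n.-1)%N & (c %| m.-1)%N]].
Proof.
rewrite /two_Frobenius; case=> N [M [[nNH nMH sNM] fM fHN [pN qMN rHM]]].
have sMH := normal_sub nMH; have sNH := normal_sub nNH.
have nNH' := normal_norm nNH; have nMH' := normal_norm nMH.
have nNM : M \subset 'N(N) := subset_trans sMH nNH'.
have eqi : #|H / N : M / N| = #|H : M|.
  by rewrite index_quotient_eq // (subset_trans (subsetIr _ _) sNM).
exists #|N|, #|M : N|, #|H : M|; split.
- by rewrite (Lagrange sNM) (Lagrange sMH).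
- exact: pN.
- by rewrite -card_quotient.
- by rewrite -card_quotient.
split.
- case/existsP: fM => K fK; have [_ ntN _ _ _] := Frobenius_context fK.
  by rewrite cardG_gt1.
- case/existsP: fHN => K fK; have [_ _ _ prM _] := Frobenius_context fK.
  by rewrite -eqi indexg_gt1; case/andP: prM.
- exact: indexg_gt0.
- exact: Frobenius_ker_dvd_ker1 fM.
- by have := Frobenius_ker_dvd_ker1 fHN; rewrite eqi card_quotient.
Qed.

Lemma qnat_p'nat {p q m : nat} : p != q -> q.-nat m -> p^'.-nat m.
Proof.
move=> npq; apply: sub_in_pnat => r _; rewrite !inE => /eqP ->.
by rewrite eq_sym.
Qed.

Lemma two_Frob_parts (gT : finGroupType) (H : {group gT}) (p q : nat) :
  p != q -> two_Frobenius H p q p -> exists n c,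
  [/\ (#|H|`_p)%N = (n * c)%N, (1 < n)%N, (1 < c)%N,
      ((#|H|`_q)%N %| n.-1)%N & (c %| ((#|H|`_q)%N).-1)%N].
Proof.
move=> npq /two_Frob_nat [n [m [c [-> pn qm pc [n1 c1 m0 d1 d2]]]]].
have n0 : (0 < n)%N by lia.
have c0 : (0 < c)%N by lia.
have qp : q != p by rewrite eq_sym.
exists n, c; rewrite !partnM ?muln_gt0 ?n0 ?m0 //.
rewrite (part_pnat_id pn) (part_pnat_id pc) (part_p'nat (qnat_p'nat npq qm)).
rewrite (part_pnat_id qm) (part_p'nat (qnat_p'nat qp pn)).
by rewrite (part_p'nat (qnat_p'nat qp pc)) muln1 muln1 mul1n.
Qed.

Lemma Frob_parts (gT : finGroupType) (H : {group gT}) (p q : nat) :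
  Frob_kernel_q_compl_p H p q ->
  [/\ ((#|H|`_p)%N %| ((#|H|`_q)%N).-1)%N, (1 < (#|H|`_p)%N)%N & (1 < (#|H|`_q)%N)%N].
Proof.
rewrite /Frob_kernel_q_compl_p; case=> Q [P [fH sQ sP]].
rewrite -(card_Hall sQ) -(card_Hall sP).
have [_ ntQ ntP _ _] := Frobenius_context fH.
by rewrite !cardG_gt1 ntQ ntP (Frobenius_dvd_ker1 fH).
Qed.

Lemma Hall_part (gT : finGroupType) (G H : {group gT}) (p q r : nat) :
  (pi2 p q).-Hall(G) H -> r \in pi2 p q -> (#|H|`_r)%N = (#|G|`_r)%N.
Proof.
move=> hH rin; rewrite (card_Hall hH) partn_part // => s; rewrite inE => /eqP -> //.
Qed.

Lemma ar_AC {X Y} : (X %| Y.-1 -> Y %| X.-1 -> 1<X -> 1<Y -> False)%N.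
Proof.
move=> d1 d2 x1 y1.
have := dvdn_leq _ d1; have := dvdn_leq _ d2. lia.
Qed.
Lemma ar_AD X n c : (X %| (n*c).-1 -> X %| n.-1 -> c %| X.-1 -> 1<X -> 1<n -> 1<c -> False)%N.
Proof.
move=> d1 d2 d3 x1 n1 c1.
have e : (n * c).-1 = c * n.-1 + c.-1 by clear d1 d2 d3; nia.
rewrite e dvdn_addr ?dvdn_mull // in d1.
have := dvdn_leq _ d1; have := dvdn_leq _ d3. clear e d2; lia.
Qed.
Lemma ar_BD {X Y n1 c1 n2 c2} : (Y %| n1.-1 -> X %| n2.-1 -> X = n1*c1 -> Y = n2*c2 -> 1<n1 ->1<n2->1<c1->1<c2 -> False)%N.
Proof.
move=> d1 d2 eX eY h1 h2 h3 h4.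
have := dvdn_leq _ d1; have := dvdn_leq _ d2.
have : n1 <= X by rewrite eX leq_pmulr //; lia.
have : n2 <= Y by rewrite eY leq_pmulr //; lia.
clear d1 d2 eX eY; lia.
Qed.

Arguments two_Frob_nat {gT H p q r}.
Arguments two_Frob_parts {gT H p q}.
Arguments Frob_parts {gT H p q}.
Arguments Hall_part {gT G H p q r}.

Theorem mainTheorem5 (gT : finGroupType) (G : {group gT}) (p q : nat) :
  prime p -> prime q -> p != q ->
  codeg_vertex G p -> codeg_vertex G q -> ~~ codeg_adjacent G p q ->
  ~ (exists H1 H2 : {group gT},
       [/\ (pi2 p q).-Hall(G) H1, (pi2 p q).-Hall(G) H2,
           Frob_kernel_q_compl_p H1 p q \/ two_Frobenius H1 p q p &
           Frob_kernel_q_compl_p H2 q p \/ two_Frobenius H2 q p q]).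
Proof.
move=> pp pq npq _ _ _ [H1 [H2 [h1 h2 t1 t2]]].
have qp : q != p by rewrite eq_sym.
have pin : p \in pi2 p q by rewrite inE eqxx.
have qin : q \in pi2 p q by rewrite inE eqxx orbT.
have e1p := Hall_part h1 pin; have e1q := Hall_part h1 qin.
have e2p := Hall_part h2 pin; have e2q := Hall_part h2 qin.
set X := (#|G|`_p)%N in e1p e2p; set Y := (#|G|`_q)%N in e1q e2q.
case: t1 => [/Frob_parts | /(two_Frob_parts npq)];
  rewrite ?e1p ?e1q;
  case: t2 => [/Frob_parts | /(two_Frob_parts qp)]; rewrite ?e2p ?e2q.
- move=> [d2 x2 y2] [d1 x1 y1]; exact: (ar_AC d1 d2 x1 x2).
- move=> [n [c [eY n1 c1 d1 d2]]] [d x1 y1].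
  by apply: (@ar_AD X n c); rewrite // -eY.
- move=> [d y1 x1] [n [c [eX n1 c1 d1 d2]]].
  by apply: (@ar_AD Y n c); rewrite // -eX.
- move=> [n2 [c2 [eY n21 c21 d21 d22]]] [n1 [c1 [eX n11 c11 d11 d12]]].
  exact: (ar_BD d11 d21 eX eY n11 n21 c11 c21).
Qed.
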